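(* The class of triangle-free graphs is the union of the class of complete bipartite graphs and the class of complements of all graphs $G$ such that $G$ is a connected (claw, bull)-free graph which is neither an expansion of a path of length at least $4$ nor an expansion of a cycle of length at least $6$.
   Context: A claw is a graph isomorphic to $K_{1,3}$. A bull is the graph obtained from a triangle by adding two pendant edges at two different vertices. A graph is (claw, bull)-free if it has no induced subgraph isomorphic to a claw or to a bull. An expansion of a graph $F$ with vertex set $\{v_1,\dots,v_n\}$ is any graph obtained from $F$ by replacing each vertex $v_i$ by a nonempty clique $K^{[i]}$, the cliques being pairwise vertex-disjoint, and adding all edges between $V(K^{[i]})$ and $V(K^{[j]})$ whenever $v_iv_j\in E(F)$ (and no other edges between different cliques). The length of a path is its number of edges. *)

(* Defs.v *)
From mathcomp Require Import all_boot.
Set Implicit Arguments. Unset Strict Implicit. Unset Printing Implicit Defensive.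

Definition simple_graph (T : finType) (e : rel T) : Prop :=
  symmetric e /\ irreflexive e.

Definition compl_graph (T : finType) (e : rel T) : rel T :=
  fun x y => (x != y) && ~~ e x y.

Definition has_induced (k : nat) (f : rel 'I_k) (T : finType) (e : rel T) : Prop :=
  exists g : 'I_k -> T, injective g /\ forall i j, e (g i) (g j) = f i j.

Definition claw_rel : rel 'I_4 :=
  fun i j => ((val i == 0) && (val j != 0)) || ((val j == 0) && (val i != 0)).

(* bull: triangle {0,1,2}, pendant 3 at 0, pendant 4 at 1 *)
Definition bull_edge (a b : nat) : bool :=
  [|| (a == 0) && (b == 1), (a == 0) && (b == 2), (a == 1) && (b == 2),
      (a == 0) && (b == 3) | (a == 1) && (b == 4)].
Definition bull_rel : rel 'I_5 :=
  fun i j => bull_edge (val i) (val j) || bull_edge (val j) (val i).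

Definition claw_free (T : finType) (e : rel T) : Prop := ~ has_induced claw_rel e.
Definition bull_free (T : finType) (e : rel T) : Prop := ~ has_induced bull_rel e.

Definition triangle_free (T : finType) (e : rel T) : Prop :=
  forall x y z : T, ~ [&& e x y, e y z & e x z].

Definition complete_bipartite (T : finType) (e : rel T) : Prop :=
  exists A : {set T}, [/\ A != set0, ~: A != set0 &
    forall x y, e x y = ((x \in A) != (y \in A))].

Definition connected_graph (T : finType) (e : rel T) : Prop :=
  (0 < #|T|) /\ forall x y : T, connect e x y.

(* path of length k (k edges, k+1 vertices 0..k) *)
Definition path_rel (k : nat) : rel 'I_k.+1 :=
  fun i j => ((val i).+1 == val j) || ((val j).+1 == val i).

(* cycle of length k (vertices 0..k-1, i ~ i+1 mod k); used for k >= 3 *)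
Definition cycle_rel (k : nat) : rel 'I_k :=
  fun i j => ((val i).+1 %% k == val j) || ((val j).+1 %% k == val i).

(* G is an expansion of F = ('I_n, f): the vertex set is partitioned into
   nonempty cliques K_i = phi^-1(i), with complete adjacency between K_i and
   K_j iff f i j, and none otherwise. *)
Definition expansion_of (n : nat) (f : rel 'I_n) (T : finType) (e : rel T) : Prop :=
  exists phi : T -> 'I_n,
    (forall i : 'I_n, exists x, phi x = i) /\
    (forall x y : T, x != y -> e x y = (phi x == phi y) || f (phi x) (phi y)).

Definition path_expansion_ge4 (T : finType) (e : rel T) : Prop :=
  exists k, 4 <= k /\ expansion_of (@path_rel k) e.

Definition cycle_expansion_ge6 (T : finType) (e : rel T) : Prop :=
  exists k, 6 <= k /\ expansion_of (@cycle_rel k) e.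

(* Main.v *)
Require Import Defs.
From mathcomp Require Import all_boot zify.
Set Implicit Arguments. Unset Strict Implicit. Unset Printing Implicit Defensive.

Section Main.
Variables (T : finType) (E : rel T).
Hypotheses (Esym : symmetric E) (Eirr : irreflexive E)
  (Hclaw : claw_free E) (Hbull : bull_free E).


Ltac clia := (repeat match goal with
   | H : is_true (E _ _) |- _ => clear H
   | H : is_true (~~ E _ _) |- _ => clear H
   | H : is_true (_ \in _) |- _ => clear H
   | H : is_true (_ \notin _) |- _ => clear H
   | H : is_true (_ && E _ _) |- _ => clear H
   end); lia.

Lemma Eneq a b : E a b -> a != b.
Proof. by apply: contraTneq => ->; rewrite Eirr. Qed.

Lemma neqE a b y : E a y -> ~~ E b y -> a != b.
Proof. by move=> H1; apply: contraNneq => <-. Qed.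

Ltac edge := solve [ by rewrite Eirr | by apply/negbTE; assumption | by assumption
  | by rewrite Esym; apply/negbTE; assumption | by rewrite Esym; assumption ].
Ltac neqs := solve [ by [] | by rewrite eq_sym | by move=> /eqP; rewrite eq_sym; apply/negP ].

Lemma claw_contra (a b c d : T) : E a b -> E a c -> E a d ->
  ~~ E b c -> ~~ E b d -> ~~ E c d -> b != c -> b != d -> c != d -> False.
Proof.
move=> Hab Hac Had Hbc Hbd Hcd nbc nbd ncd.
have nab := Eneq Hab; have nac := Eneq Hac; have nad := Eneq Had.
apply: Hclaw; exists (fun i : 'I_4 => nth a [:: a; b; c; d] i); split.
  move=> [[|[|[|[|i]]]] Hi] [[|[|[|[|j]]]] Hj] //= H; apply: val_inj => //=;
  move: nab nac nad nbc nbd ncd; rewrite H ?eqxx //.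
move=> [[|[|[|[|i]]]] Hi] [[|[|[|[|j]]]] Hj] //=; rewrite /claw_rel /=; edge.

Qed.

Lemma bull_contra (v0 v1 v2 v3 v4 : T) : E v0 v1 -> E v0 v2 -> E v1 v2 ->
  E v0 v3 -> ~~ E v1 v3 -> ~~ E v2 v3 ->
  E v1 v4 -> ~~ E v0 v4 -> ~~ E v2 v4 -> ~~ E v3 v4 -> False.
Proof.
move=> H01 H02 H12 H03 H13 H23 H14 H04 H24 H34.
have n01 := Eneq H01; have n02 := Eneq H02; have n12 := Eneq H12.
have n03 := Eneq H03; have n14 := Eneq H14.
have n13 : v1 != v3 by apply: (neqE H12); rewrite Esym.
have n23 : v2 != v3 by apply: (neqE (y:=v1)); rewrite Esym // Esym.
have n24 : v2 != v4 by apply: (neqE (y:=v0)); rewrite Esym // Esym.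
have n04 : v0 != v4 by apply: (neqE H02); rewrite Esym.
have n34 : v3 != v4 by apply: (neqE (y:=v0)); rewrite Esym // Esym.
apply: Hbull; exists (fun i : 'I_5 => nth v0 [:: v0; v1; v2; v3; v4] i); split.
  move=> [[|[|[|[|[|i]]]]] Hi] [[|[|[|[|[|j]]]]] Hj] //= H; apply: val_inj => //=;
  move: n01 n02 n12 n03 n14 n13 n23 n24 n04 n34; rewrite H ?eqxx //.
by move=> [[|[|[|[|[|i]]]]] Hi] [[|[|[|[|[|j]]]]] Hj] //=; rewrite /bull_rel /=; edge.
Qed.

Definition near (i j : nat) := (i <= j.+1) && (j <= i.+1).

Definition pstruct (S : {set T}) (phi : T -> nat) (m : nat) :=
  [/\ forall y, y \in S -> phi y <= m,
      forall i, i <= m -> exists2 y, y \in S & phi y = i &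
      forall y z, y \in S -> z \in S -> y != z -> E y z = near (phi y) (phi z)].

Section Pattern.
Variables (S : {set T}) (phi : T -> nat) (m : nat) (r : nat -> T) (x : T).
Hypotheses (Hs : pstruct S phi m) (Hm : 4 <= m)
  (Hr : forall j, j <= m -> r j \in S /\ phi (r j) = j) (Hx : x \notin S).

Lemma rneq i j : i <= m -> j <= m -> i != j -> r i != r j.
Proof.
move=> Hi Hj; apply: contraNneq => H.
by have [_ <-] := Hr Hi; rewrite H; have [_ ->] := Hr Hj.
Qed.

Lemma rxneq i : i <= m -> r i != x.
Proof. by move=> Hi; apply: contraNneq Hx => <-; have [] := Hr Hi. Qed.

Lemma rE i j : i <= m -> j <= m -> i != j -> E (r i) (r j) = near i j.
Proof.
move=> Hi Hj Hij; case: Hs => _ _ H3.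
have [Si Pi] := Hr Hi; have [Sj Pj] := Hr Hj.
by rewrite H3 // ?Pi ?Pj // rneq.
Qed.

Ltac side := first
 [ done
 | by rewrite Esym
 | match goal with |- is_true (E (r _) (r _)) => by rewrite rE /near; clia end
 | match goal with |- is_true (~~ E (r _) (r _)) => by rewrite rE /near; clia end
 | match goal with |- is_true (r _ != r _) => by apply: rneq; clia end
 | match goal with |- is_true (r _ != x) => by apply: rxneq; clia end
 | match goal with |- is_true (x != r _) => by rewrite eq_sym; apply: rxneq; clia end
 | match goal with H : forall j, _ -> is_true (~~ E x (r j)) |- _ =>
     solve [ apply: H; clia | rewrite Esym; apply: H; clia ] end ].

Lemma pattern : (exists2 j, j <= m & E x (r j)) ->
  (exists2 t, t <= m & forall j, j <= m -> E x (r j) = near t j) \/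
  (forall j, j <= m -> E x (r j) = (j == 0)) \/
  (forall j, j <= m -> E x (r j) = (j == m)) \/
  (forall j, j <= m -> E x (r j) = (j == 0) || (j == m)).
Proof.
move=> Hex.
have Hex' : exists j, (j <= m) && E x (r j) by case: Hex => j H1 H2; exists j; rewrite H1.
case: (ex_minnP Hex') => t /andP [Htm Ht] Hmin.
have Hlt : forall j, j < t -> ~~ E x (r j).
  move=> j Hj; apply/negP => Hxj.
  by have := Hmin j; rewrite Hxj andbT; move=> /(_ (leq_trans (ltnW Hj) Htm)); clia.
case: (posnP t) => [t0 | tpos].
- subst t.
  case: (boolP (E x (r 1))) => H1; last first.
    have Hmid : forall j, 2 <= j -> j < m -> ~~ E x (r j).
      move=> j H2j Hjm; apply/negP => Hxj.
      have Hex2 : exists j, [&& 2 <= j, j < m & E x (r j)] by exists j; rewrite H2j Hjm Hxj.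
      case: (ex_minnP Hex2) => j0 /and3P [H2 H3 H4] Hmin2.
      have Hb : ~~ E x (r j0.-1).
        case: (eqVneq j0 2) => [-> // | j2].
        apply/negP => Hb; have := Hmin2 j0.-1; rewrite Hb andbT.
        have -> : (2 <= j0.-1) && (j0.-1 < m) by clia.
        by move=> /(_ isT); clia.
      case: (boolP (E x (r j0.+1))) => Hc; last first.
        apply: (@claw_contra (r j0) (r j0.-1) (r j0.+1) x); side.
      case: (eqVneq j0 2) => [j2 | j2]; last first.
        apply: (@bull_contra (r j0) x (r j0.+1) (r j0.-1) (r 0)); side.
      subst j0.
      case: (boolP (E x (r 4))) => H4'.
        apply: (@claw_contra x (r 0) (r 2) (r 4)); side.
      apply: (@bull_contra (r 3) x (r 2) (r 4) (r 0)); side.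
    case: (boolP (E x (r m))) => Hxm.
      right; right; right => j Hj.
      case: (eqVneq j 0) => [-> // | j0]; case: (eqVneq j m) => [-> // | jm].
      case: (eqVneq j 1) => [-> | j1]; first by apply/negbTE.
      by apply/negbTE/Hmid; clia.
    right; left => j Hj.
    case: (eqVneq j 0) => [-> // | j0]; case: (eqVneq j m) => [-> | jm]; first by apply/negbTE.
    case: (eqVneq j 1) => [-> | j1]; first by apply/negbTE.
    by apply/negbTE/Hmid; clia.
  case: (boolP (E x (r 2))) => H2; last first.
    left; exists 0 => // j Hj.
    case: (leqP j 1) => Hj1; first by case: j Hj Hj1 => [|[|]].
    have -> : near 0 j = false by rewrite /near; clia.
    case: (eqVneq j 2) => [-> | j2]; first by apply/negbTE.
    apply/negbTE/negP => Hxj.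
    case: (eqVneq j 3) => [j3 | j3]; last first.
      apply: (@bull_contra (r 1) x (r 0) (r 2) (r j)); side.
    subst j; case: (boolP (E x (r 4))) => H4.
      apply: (@bull_contra (r 1) x (r 0) (r 2) (r 4)); side.
    apply: (@claw_contra (r 3) (r 2) (r 4) x); side.
  left; exists 1; first clia.
  move=> j Hj.
  case: (leqP j 2) => Hj2; first by case: j Hj Hj2 => [|[|[|]]].
  have -> : near 1 j = false by rewrite /near; clia.
  apply/negbTE/negP => Hxj.
  case: (eqVneq j 3) => [j3 | j3]; last first.
    apply: (@claw_contra x (r 0) (r 2) (r j)); side.
  subst j; case: (boolP (E x (r 4))) => H4.
    apply: (@claw_contra x (r 0) (r 2) (r 4)); side.
  apply: (@bull_contra (r 3) x (r 2) (r 4) (r 0)); side.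
- case: (eqVneq t m) => [tm | tnm].
    right; right; left => j Hj.
    case: (eqVneq j m) => [-> | jnm]; first by rewrite -tm.
    by apply/negbTE/Hlt; clia.
  case: (boolP (E x (r t.+1))) => Ht1; last first.
    exfalso; apply: (@claw_contra (r t) (r t.-1) (r t.+1) x); side.
  case: (eqVneq t.+1 m) => [t1m | t1nm].
    left; exists m => // j Hj.
    case: (leqP t j) => Htj; last by rewrite (negbTE (Hlt _ Htj)) /near; clia.
    have -> : near m j by rewrite /near; clia.
    by case: (eqVneq j t) => [-> // | ?]; have -> : j = t.+1 by clia.
  case: (boolP (E x (r t.+2))) => Ht2; last first.
    exfalso; apply: (@bull_contra (r t) (r t.+1) x (r t.-1) (r t.+2)); side.
  left; exists t.+1; first clia.
  move=> j Hj.
  case: (leqP t j) => Htj; last by rewrite (negbTE (Hlt _ Htj)) /near; clia.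
  case: (leqP j t.+2) => Hjt.
    have -> : near t.+1 j by rewrite /near; clia.
    by case: (eqVneq j t) => [-> // | ?]; case: (eqVneq j t.+1) => [-> // | ?];
      have -> : j = t.+2 by clia.
  have -> : near t.+1 j = false by rewrite /near; clia.
  apply/negbTE/negP => Hxj.
  case: (eqVneq j t.+3) => [jt3 | jnt3].
    subst j; apply: (@bull_contra (r t) x (r t.+1) (r t.-1) (r t.+3)); side.
  apply: (@claw_contra x (r t) (r t.+2) (r j)); side.
Qed.

Section Uniform.
Variable (y : T) (j : nat).
Hypotheses (Hy : y \in S) (Hj : phi y = j) (Hxr : E x (r j)) (nxy : ~~ E x y).

Lemma jm : j <= m. Proof. by case: Hs => H1 _ _; rewrite -Hj H1. Qed.

Lemma yneqr : y != r j.
Proof. by apply: contraNneq nxy => ->. Qed.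

Lemma yrj : E y (r j).
Proof.
case: Hs => _ _ H3; have [S1 P1] := Hr jm.
by rewrite H3 // ?yneqr // Hj P1 /near; apply/andP; split.
Qed.

Lemma yE k : k <= m -> k != j -> E y (r k) = near j k.
Proof.
move=> Hk Hkj; case: Hs => _ _ H3; have [S1 P1] := Hr Hk.
rewrite H3 // ?Hj ?P1 //; apply: contra_neq Hkj => E1.
by rewrite -P1 -E1 Hj.
Qed.

Lemma yneq k : k <= m -> k != j -> y != r k.
Proof.
move=> Hk Hkj; apply: contra_neq Hkj => E1.
by have [_ <-] := Hr Hk; rewrite -E1 Hj.
Qed.

Lemma yxneq : y != x.
Proof. by apply: contraNneq Hx => <-. Qed.

Ltac sidey := first
 [ side
 | by apply: yrj
 | by rewrite Esym; apply: yrj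
 | by apply: yneqr
 | by rewrite eq_sym; apply: yneqr
 | by apply: yxneq
 | by rewrite eq_sym; apply: yxneq
 | by rewrite Esym
 | match goal with |- is_true (E y (r _)) => by rewrite yE /near; clia end
 | match goal with |- is_true (~~ E y (r _)) => by rewrite yE /near; clia end
 | match goal with |- is_true (E (r _) y) => by rewrite Esym yE /near; clia end
 | match goal with |- is_true (~~ E (r _) y) => by rewrite Esym yE /near; clia end
 | match goal with |- is_true (y != r _) => by apply: yneq; clia end
 | match goal with |- is_true (r _ != y) => by rewrite eq_sym; apply: yneq; clia end
 | match goal with H : forall j, _ -> E x (r j) = _ |- is_true (E x (r _)) =>
     by rewrite H /near; clia end
 | match goal with H : forall j, _ -> E x (r j) = _ |- is_true (~~ E x (r _)) =>
     by rewrite H /near; clia end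
 | match goal with H : forall j, _ -> E x (r j) = _ |- is_true (E (r _) x) =>
     by rewrite Esym H /near; clia end
 | match goal with H : forall j, _ -> E x (r j) = _ |- is_true (~~ E (r _) x) =>
     by rewrite Esym H /near; clia end ].

Lemma unif_near t : t <= m -> (forall k, k <= m -> E x (r k) = near t k) ->
  near t j -> False.
Proof.
move=> Ht Hc Htj; have Hjm := jm.
case: (eqVneq j t) => [jt | jnt].
  subst t; case: (leqP j.+2 m) => Ht2.
    apply: (@claw_contra (r j.+1) y x (r j.+2)); sidey.
  apply: (@claw_contra (r j.-1) y x (r j.-2)); sidey.
case: (eqVneq t j.+1) => [tj | tnj].
  subst t; case: (leqP j.+3 m) => Ht2.
    apply: (@bull_contra (r j.+1) (r j.+2) x y (r j.+3)); sidey.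
  apply: (@bull_contra (r j) (r j.-1) y x (r j.-2)); sidey.
have tj : t = j.-1 by move: Htj; rewrite /near; clia.
subst t; case: (leqP 3 j) => Ht2.
  apply: (@bull_contra (r j.-1) (r j.-2) x y (r (j - 3))); sidey.
apply: (@bull_contra (r j) (r j.+1) y x (r j.+2)); sidey.
Qed.

Lemma unif_0 : ~~ E x (r 1) -> ~~ E x (r 2) -> j = 0 -> False.
Proof.
move=> H1 H2 j0; have Hjm := jm.
apply: (@bull_contra (r j) (r 1) y x (r 2)); sidey.
Qed.

Lemma unif_m : ~~ E x (r m.-1) -> ~~ E x (r m.-2) -> j = m -> False.
Proof.
move=> H1 H2 j0; have Hjm := jm.
apply: (@bull_contra (r j) (r m.-1) y x (r m.-2)); sidey.
Qed.

End Uniform.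



Lemma lift_c (c : nat -> bool) : (forall y, y \in S -> E x y -> E x (r (phi y))) ->
  (forall k, k <= m -> E x (r k) = c k) ->
  (forall y, y \in S -> E x (r (phi y)) -> ~~ E x y -> False) ->
  forall y, y \in S -> E x y = c (phi y).
Proof.
move=> Hrx Hc Hno y Hy.
have Hpm : phi y <= m by case: Hs => H1 _ _; apply: H1.
case: (boolP (E x y)) => Hxy; first by rewrite -Hc // Hrx.
case: (boolP (c (phi y))) => // Hcy; exfalso; apply: (Hno y Hy) => //.
by rewrite Hc.
Qed.

Lemma pattern_all : (forall y, y \in S -> E x y -> E x (r (phi y))) ->
  (exists2 j, j <= m & E x (r j)) ->
  (exists2 t, t <= m & forall y, y \in S -> E x y = near t (phi y)) \/
  (forall y, y \in S -> E x y = (phi y == 0)) \/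
  (forall y, y \in S -> E x y = (phi y == m)) \/
  (forall y, y \in S -> E x y = (phi y == 0) || (phi y == m)).
Proof.
move=> Hrx Hex.
case: (pattern Hex) => [[t Ht Hc] | [Hc | [Hc | Hc]]].
- left; exists t => //; apply: (@lift_c (near t)) => // y Hy Hxr nxy.
  apply: (unif_near Hy erefl Hxr nxy Ht Hc).
  by rewrite -Hc // ; case: Hs => H1 _ _; apply: H1.
- right; left; apply: (@lift_c (fun k => k == 0)) => // y Hy Hxr nxy.
  have Hpm : phi y <= m by case: Hs => H1 _ _; apply: H1.
  have H0 : phi y == 0 by move: Hxr; rewrite Hc.
  by apply: (@unif_0 y (phi y) Hy erefl Hxr nxy); [rewrite Hc; clia | rewrite Hc; clia | apply/eqP].
- right; right; left; apply: (@lift_c (fun k => k == m)) => // y Hy Hxr nxy.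
  have Hpm : phi y <= m by case: Hs => H1 _ _; apply: H1.
  have H0 : phi y == m by move: Hxr; rewrite Hc.
  by apply: (@unif_m y (phi y) Hy erefl Hxr nxy); [rewrite Hc; clia | rewrite Hc; clia | apply/eqP].
- right; right; right; apply: (@lift_c (fun k => (k == 0) || (k == m))) => // y Hy Hxr nxy.
  have Hpm : phi y <= m by case: Hs => H1 _ _; apply: H1.
  move: (Hxr); rewrite Hc // => /orP [] /eqP H0.
    by apply: (@unif_0 y (phi y) Hy erefl Hxr nxy); [rewrite Hc; clia | rewrite Hc; clia | ].
  by apply: (@unif_m y (phi y) Hy erefl Hxr nxy); [rewrite Hc; clia | rewrite Hc; clia | ].
Qed.

End Pattern.

Lemma near_sym a b : near a b = near b a.
Proof. by rewrite /near andbC. Qed.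

Lemma pstruct_add S phi m x (f : nat -> nat) (tx m' : nat) :
  pstruct S phi m -> x \notin S ->
  (forall i, i <= m -> f i <= m') -> tx <= m' ->
  (forall i, i <= m' -> i = tx \/ exists2 j, j <= m & f j = i) ->
  (forall a b, a <= m -> b <= m -> near (f a) (f b) = near a b) ->
  (forall y, y \in S -> E x y = near tx (f (phi y))) ->
  pstruct (x |: S) (fun z => if z == x then tx else f (phi z)) m'.
Proof.
move=> [H1 H2 H3] Hx Hf Htx Hsur Hnear HxE; split.
- move=> y; rewrite in_setU1; case: (eqVneq y x) => //= _ Hy.
  by apply/Hf/H1.
- move=> i /Hsur [-> | [j Hj <-]]; first by exists x; rewrite ?setU11 ?eqxx.
  have [y Hy <-] := H2 j Hj; exists y; first by rewrite in_setU1 Hy orbT.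
  case: (eqVneq y x) => [yx|//]; by move: Hx; rewrite -yx Hy.
- move=> y z; rewrite !in_setU1.
  case: (eqVneq y x) => [-> | yx]; case: (eqVneq z x) => [-> | zx] //= Hy Hz yz.
  + by rewrite HxE.
  + by rewrite Esym HxE // near_sym.
  + by rewrite Hnear ?H1 // H3.
Qed.

Definition rep (S : {set T}) (phi : T -> nat) (x : T) (j : nat) : T :=
  if [pick y | (y \in S) && (phi y == j) && E x y] is Some y then y
  else odflt x [pick y | (y \in S) && (phi y == j)].

Lemma rep_ok S phi m x j : pstruct S phi m -> j <= m ->
  rep S phi x j \in S /\ phi (rep S phi x j) = j.
Proof.
move=> [H1 H2 H3] Hj; rewrite /rep.
case: pickP => [y /andP [/andP [Hy /eqP <-] _] // | _].
case: pickP => [y /andP [Hy /eqP <-] // | Hn].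
have [y Hy Py] := H2 j Hj; have := Hn y; by rewrite Hy Py eqxx.
Qed.

Lemma rep_adj (S : {set T}) (phi : T -> nat) x y : y \in S -> E x y -> E x (rep S phi x (phi y)).
Proof.
move=> Hy Hxy; rewrite /rep; case: pickP => [z /andP [_ ->] // | Hn].
by have := Hn y; rewrite Hy eqxx Hxy.
Qed.

Lemma extend S phi m x : pstruct S phi m -> 4 <= m -> x \notin S ->
  (exists2 y, y \in S & E x y) ->
  (exists phi' m', 4 <= m' /\ pstruct (x |: S) phi' m') \/
  (forall y, y \in S -> E x y = (phi y == 0) || (phi y == m)).
Proof.
move=> Hs Hm Hx [y0 Hy0 Hxy0].
have Hr := fun j => @rep_ok S phi m x j Hs.
have H1s : forall y, y \in S -> phi y <= m by case: Hs.
have Hex : exists2 j, j <= m & E x (rep S phi x j).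
  exists (phi y0); first by case: Hs => H1 _ _; apply: H1.
  exact: rep_adj.
have Hrx : forall y, y \in S -> E x y -> E x (rep S phi x (phi y)).
  by move=> y; apply: rep_adj.
case: (pattern_all Hs Hm Hr Hx Hrx Hex) => [[t Ht Hc] | [Hc | [Hc | Hc]]].
- left; exists (fun z => if z == x then t else id (phi z)), m; split => //.
  apply: (pstruct_add (f := id)) Hs Hx _ Ht _ _ _ => //.
  by move=> i Hi; right; exists i.
- left; exists (fun z => if z == x then 0 else (phi z).+1), m.+1; split; first clia.
  apply: (pstruct_add (f := succn) (tx := 0)) Hs Hx _ _ _ _ _ => //.
  + move=> i Hi; case: i Hi => [|i] Hi; [by left | right; exists i => //; clia].
  + move=> y Hy; rewrite Hc // /near; clia.
- left; exists (fun z => if z == x then m.+1 else id (phi z)), m.+1; split; first clia.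
  apply: (pstruct_add (f := id) (tx := m.+1)) Hs Hx _ _ _ _ _ => //.
  + by move=> i Hi; clia.
  + move=> i Hi; case: (eqVneq i m.+1) => [-> | im]; [by left | right; exists i => //; clia].
  + move=> y Hy; have Hpm : phi y <= m by apply: H1s.
    rewrite Hc // /near /=; clia.
- by right.
Qed.


Definition closing (S : {set T}) (phi : T -> nat) (m : nat) (x : T) := forall y, y \in S -> E x y = (phi y == 0) || (phi y == m).

Lemma maximal n : forall S phi m, #|~: S| <= n -> pstruct S phi m -> 4 <= m ->
  exists S' phi' m', [/\ 4 <= m', pstruct S' phi' m' &
    forall x, x \notin S' -> (exists2 y, y \in S' & E x y) -> closing S' phi' m' x].
Proof.
elim: n => [|n IH] S phi m Hn Hs Hm.
  exists S, phi, m; split => // x Hx; move: Hn; rewrite leqn0 cards_eq0 => /eqP H.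
  by have := Hx; rewrite -in_setC H in_set0.
case: (boolP [exists x, (x \notin S) && [exists y in S, E x y] &&
   ~~ [forall y in S, E x y == (phi y == 0) || (phi y == m)]]) => Hex; last first.
  exists S, phi, m; split => // x Hx [y Hy Hxy] z Hz.
  move: Hex; rewrite negb_exists => /forallP /(_ x); rewrite Hx /=.
  have -> : [exists y0 in S, E x y0] by apply/existsP; exists y; rewrite Hy.
  by rewrite /= negbK => /forallP /(_ z); rewrite Hz => /eqP.
case/existsP: Hex => x /andP [/andP [Hx /existsP [y /andP [Hy Hxy]]] Hnc].
case: (extend Hs Hm Hx (ex_intro2 _ _ y Hy Hxy)) => [[phi' [m' [Hm' Hs']]] | Hcl].
  apply: (IH (x |: S) phi' m') => //.
  rewrite setCU.
  suff : #|~: [set x] :&: ~: S| < #|~: S| by move: Hn; clear; lia.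
    apply: proper_card; rewrite properEneq subsetIr andbT.
    apply/eqP => H; have : x \in ~: S by rewrite in_setC.
    by rewrite -H !inE eqxx.
exfalso; move: Hnc; apply/negP; rewrite negbK; apply/forallP => z; apply/implyP => Hz.
by rewrite Hcl.
Qed.

Lemma crossing (A : {set T}) a b : connect E a b -> a \notin A -> b \in A ->
  exists u v, [/\ u \notin A, v \in A & E u v].
Proof.
move=> /connectP [p Hp ->] {b}; elim: p a Hp => [|c p IH] a /= Hp Ha Hb.
  by rewrite Hb in Ha.
case/andP: Hp => Hac Hp.
case: (boolP (c \in A)) => Hc; first by exists a, c; split.
exact: (IH c Hp Hc Hb).
Qed.


Lemma final S phi m : (forall a b, connect E a b) -> 4 <= m -> pstruct S phi m ->
  (forall x, x \notin S -> (exists2 y, y \in S & E x y) -> closing S phi m x) ->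
  path_expansion_ge4 E \/ cycle_expansion_ge6 E.
Proof.
move=> Hcon Hm Hs Hmax; have Hs' := Hs; case: Hs' => [H1 H2 H3].
have [y0 Hy0 _] := H2 0 isT.
pose r := rep S phi y0.
have Hr : forall j, j <= m -> r j \in S /\ phi (r j) = j by move=> j; apply: rep_ok Hs.
have rn : forall i j, i <= m -> j <= m -> i != j -> r i != r j.
  move=> i j Hi Hj; apply: contra_neq => H.
  by have [_ <-] := Hr i Hi; rewrite H; have [_ ->] := Hr j Hj.
case: (boolP [forall z, z \in S]) => [/forallP HS | ].
  left; exists m; split => //.
  exists (fun z => inord (phi z) : 'I_m.+1); split.
    move=> i; have [y Hy Py] := H2 i (ltn_ord i).
    by exists y; apply: val_inj; rewrite /= inordK Py // ltnS H1.
  move=> a b ab; rewrite H3 ?HS // /path_rel -val_eqE /= !inordK ?ltnS ?H1 ?HS //.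
  rewrite /near; clia.
rewrite negb_forall => /existsP [z0 Hz0].
have Hadj : forall z, z \notin S -> exists2 y, y \in S & E z y.
  move=> z Hz; case: (boolP [exists y in S, E z y]) => [/exists_inP // | Hno]; exfalso.
  pose A := [set w | (w \in S) || [exists y in S, E w y]].
  have HzA : z \notin A by rewrite inE negb_or Hz.
  have Hy0A : y0 \in A by rewrite inE Hy0.
  have [u [v [HuA HvA Huv]]] := crossing (Hcon z y0) HzA Hy0A.
  move: HuA; rewrite inE negb_or => /andP [HuS Hun].
  have nu : forall y, y \in S -> ~~ E u y.
    by move=> y Hy; apply: contra Hun => Huy; apply/exists_inP; exists y.
  have HvS : v \notin S.
    by apply/negP => HvS; move: (nu v HvS); rewrite Huv.
  have Hvad : exists2 y, y \in S & E v y.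
    by move: HvA; rewrite inE (negbTE HvS) /= => /exists_inP.
  have Hcl := Hmax v HvS Hvad.
  have [R0 P0] := Hr 0 isT; have [Rm Pm] := Hr m (leqnn m).
  have neq1 : forall y, y \in S -> u != y.
    by move=> y Hy; apply: contraNneq HuS => ->.
  apply: (@claw_contra v u (r 0) (r m)).
  - by rewrite Esym.
  - by rewrite Hcl // P0.
  - by rewrite Hcl // Pm eqxx orbT.
  - exact: nu.
  - exact: nu.
  - by rewrite H3 // ?P0 ?Pm /near ?rn //; clia.
  - exact: neq1.
  - exact: neq1.
  - by rewrite rn //; clia.
have Hcl : forall z, z \notin S -> closing S phi m z by move=> z Hz; apply: Hmax (Hadj z Hz).
have Hcli : forall z z', z \notin S -> z' \notin S -> z != z' -> E z z'.
  move=> z z' Hz Hz' zz'; apply/negPn/negP => nzz.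
  have [R0 P0] := Hr 0 isT; have [R1 P1] := Hr 1 (leq_trans (isT : 1 <= 4) Hm).
  apply: (@claw_contra (r 0) z z' (r 1)).
  - by rewrite Esym Hcl // P0.
  - by rewrite Esym Hcl // P0.
  - by rewrite H3 // ?P0 ?P1 // rn //; clia.
  - by [].
  - by rewrite Hcl // P1 /=; clia.
  - by rewrite Hcl // P1 /=; clia.
  - by [].
  - by apply: contraNneq Hz => ->.
  - by apply: contraNneq Hz' => ->.
right; exists m.+2; split; first clia.
pose lab z := if z \in S then phi z else m.+1.
have Hlab : forall z, lab z < m.+2.
  by move=> z; rewrite /lab; case: ifP => Hz //; rewrite ltnS (leq_trans (H1 z Hz)).
exists (fun z => inord (lab z) : 'I_m.+2); split.
  move=> i; case: (leqP i m) => Him.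
    have [y Hy Py] := H2 i Him; exists y; apply: val_inj.
    by rewrite /= inordK // /lab Hy Py.
  exists z0; apply: val_inj; rewrite /= inordK // /lab (negbTE Hz0).
  by have := ltn_ord i; clia.
move=> a b ab; rewrite /cycle_rel -val_eqE /= !inordK //.
rewrite /lab; case: (boolP (a \in S)) => Ha; case: (boolP (b \in S)) => Hb.
- rewrite H3 //; have := H1 a Ha; have := H1 b Hb; rewrite /near.
  move: (phi a) (phi b) => pa pb; clear; move=> Hb Ha; rewrite !modn_small; lia.
- rewrite Esym Hcl //; have := H1 a Ha; move: (phi a) => pa; move: Hm; clear => Hm Hpa.
  rewrite modnn modn_small; lia.
- rewrite Hcl //; have := H1 b Hb; move: (phi b) => pb; move: Hm; clear => Hm Hpb.
  rewrite modnn modn_small; lia.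
- by rewrite Hcli // eqxx.
Qed.


Definition hasP5 := exists S phi, pstruct S phi 4.

Lemma p5 (a b c d f : T) : E a b -> E b c -> E c d -> E d f ->
  ~~ E a c -> ~~ E a d -> ~~ E a f -> ~~ E b d -> ~~ E b f -> ~~ E c f -> hasP5.
Proof.
move=> Hab Hbc Hcd Hdf Hac Had Haf Hbd Hbf Hcf.
have nab := Eneq Hab; have nbc := Eneq Hbc; have ncd := Eneq Hcd; have ndf := Eneq Hdf.
have nac : a != c by rewrite eq_sym; apply: (neqE Hcd).
have nad : a != d by rewrite eq_sym; apply: (neqE Hdf).
have naf : a != f by rewrite eq_sym; apply: (neqE (y := d)) => //; rewrite Esym.
have nbd : b != d by rewrite eq_sym; apply: (neqE Hdf).
have nbf : b != f by rewrite eq_sym; apply: (neqE (y := d)) => //; rewrite Esym.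
have ncf : c != f by apply: (neqE (y := b)); rewrite Esym.
pose s := [:: a; b; c; d; f].
have Hu : uniq s.
  rewrite /s /= !inE !negb_or nab nac nad naf nbc nbd nbf ncd ncf ndf.
  done.
exists [set z in s], (fun z => index z s); split.
- by move=> y; rewrite in_set => Hy; rewrite -ltnS; have := index_mem y s; rewrite Hy.
- move=> i Hi; exists (nth a s i); first by rewrite in_set mem_nth.
  by rewrite index_uniq.
- move=> y z; rewrite !in_set => Hy Hz yz.
  have Hiy := index_mem y s; have Hiz := index_mem z s.
  rewrite Hy in Hiy; rewrite Hz in Hiz.
  have nyz : index y s != index z s.
    by apply: contra_neq yz => H; rewrite -(nth_index a Hy) H nth_index.
  rewrite -{1}(nth_index a Hy) -{1}(nth_index a Hz).
  move: (index y s) (index z s) Hiy Hiz nyz => i j.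
  by case: i => [|[|[|[|[|i]]]]]; case: j => [|[|[|[|[|j]]]]] //= _ _ _; rewrite /near /=; edge.
Qed.


Ltac sd := first [ done | by rewrite Esym | by rewrite eq_sym ].

Lemma base_case1 a b c u v w : ~~ E a b -> ~~ E b c -> ~~ E a c ->
  a != b -> b != c -> a != c ->
  E a u -> E b u -> E b v -> E c v -> E a w -> E c w -> hasP5.
Proof.
move=> Hab Hbc Hac nab nbc nac Hau Hbu Hbv Hcv Haw Hcw.
have Huc : ~~ E u c.
  apply/negP => Huc; apply: (@claw_contra u a b c); sd.
have Hva : ~~ E v a.
  apply/negP => Hva; apply: (@claw_contra v b c a); sd.
have Hwb : ~~ E w b.
  apply/negP => Hwb; apply: (@claw_contra w a c b); sd.
case: (boolP (E u v)) => Huv; last first.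
  apply: (@p5 a u b v c); sd.
case: (boolP (E v w)) => Hvw; last first.
  apply: (@p5 b v c w a); sd.
case: (boolP (E u w)) => Huw; last first.
  apply: (@p5 c w a u b); sd.
exfalso; apply: (@bull_contra u w a b c); sd.
Qed.


Definition nbr_set (D : {set T}) := [set z | [exists y in D, (y == z) || E y z]].

Lemma nbr_sub (D : {set T}) z : z \in D -> z \in nbr_set D.
Proof. by move=> Hz; rewrite inE; apply/exists_inP; exists z; rewrite ?eqxx. Qed.

Lemma nbr_adj (D : {set T}) y z : y \in D -> E y z -> z \in nbr_set D.
Proof. by move=> Hy Hyz; rewrite inE; apply/exists_inP; exists y; rewrite ?Hyz ?orbT. Qed.

Lemma nbr_inv (D : {set T}) z : z \in nbr_set D -> z \in D \/ exists2 y, y \in D & E y z.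
Proof.
by rewrite inE => /exists_inP [y Hy /orP [/eqP <- | Hyz]]; [left | right; exists y].
Qed.

Lemma base_case2 a b c : (forall x y, connect E x y) ->
  ~~ E a b -> ~~ E b c -> ~~ E a c -> a != b -> b != c -> a != c ->
  (forall z, ~~ (E a z && E b z)) -> hasP5.
Proof.
move=> Hcon Hab Hbc Hac nab nbc nac Hno.
pose D1 := nbr_set [set a]; pose D2 := nbr_set D1; pose D3 := nbr_set D2.
have aD1 : a \in D1 by apply: nbr_sub; rewrite in_set1.
have D1inv : forall y, y \in D1 -> y = a \/ E a y.
  move=> y /nbr_inv [H | [y' Hy' Hy]]; first by left; apply/eqP; rewrite -in_set1.
  by right; move: Hy'; rewrite in_set1 => /eqP <-.
have nD1 : forall z, z \notin D1 -> ~~ E a z.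
  by move=> z; apply: contra => Haz; apply: (nbr_adj (y := a)) => //; rewrite in_set1.
have nD2 : forall y z, y \in D1 -> z \notin D2 -> ~~ E y z.
  by move=> y z Hy; apply: contra => Hyz; apply: (nbr_adj Hy).
have nD3 : forall y z, y \in D2 -> z \notin D3 -> ~~ E y z.
  by move=> y z Hy; apply: contra => Hyz; apply: (nbr_adj Hy).
have bD2 : b \notin D2.
  apply/negP => /nbr_inv [/D1inv [ba | Hab'] | [y /D1inv [-> | Hay] Hyb]].
  - by rewrite ba eqxx in nab.
  - by rewrite Hab' in Hab.
  - by rewrite Hyb in Hab.
  - by have := Hno y; rewrite Hay Esym Hyb.
have chain : forall z, z \notin D2 -> z \in D3 ->
    exists y1 y2, [/\ E a y1, E y1 y2, E y2 z & y2 \notin D1].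
  move=> z Hz /nbr_inv [Hz' | [y2 Hy2 Hy2z]]; first by rewrite Hz' in Hz.
  have y2D1 : y2 \notin D1 by apply/negP => H; have := nD2 _ _ H Hz; rewrite Hy2z.
  case/nbr_inv: Hy2 => [H | [y1 Hy1 Hy12]]; first by rewrite H in y2D1.
  case/D1inv: (Hy1) => [ya | Hay1].
    by move/nD1: y2D1; rewrite -ya Hy12.
  by exists y1, y2; split.
case: (boolP (b \in D3)) => HbD3; last first.
  have aD3 : a \in D3 by do 2 apply: nbr_sub.
  have [u [v [HuA HvA Huv]]] := crossing (Hcon b a) HbD3 aD3.
  have vD2 : v \notin D2 by apply/negP => H; have := nD3 _ _ H HuA; rewrite Esym Huv.
  have [y1 [y2 [Hay1 Hy12 Hy2v y2D1]]] := chain v vD2 HvA.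
  have y1D1 : y1 \in D1 by apply: (nbr_adj (y := a)); rewrite ?in_set1.
  have y2D2 : y2 \in D2 by apply: nbr_adj y1D1 Hy12.
  have uD2 : u \notin D2 by apply: contra HuA; apply: nbr_sub.
  have uD1 : u \notin D1 by apply: contra uD2; apply: nbr_sub.
  have vD1 : v \notin D1 by apply: contra vD2; apply: nbr_sub.
  apply: (@p5 a y1 y2 v u) => //; first by rewrite Esym.
  - exact: nD1.
  - exact: nD1.
  - exact: nD1.
  - exact: nD2.
  - exact: nD2.
  - exact: nD3.
have [y1 [y2 [Hay1 Hy12 Hy2b y2D1]]] := chain b bD2 HbD3.
have y1D1 : y1 \in D1 by apply: (nbr_adj (y := a)); rewrite ?in_set1.
have Hay2 : ~~ E a y2 := nD1 _ y2D1.
have Hy1b : ~~ E y1 b := nD2 _ _ y1D1 bD2.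
have ny2a : y2 != a by apply: (neqE Hy2b).
have ny2c : y2 != c by apply: (neqE Hy2b); rewrite Esym.
have ny1b : y1 != b by apply: (neqE (y := a)); rewrite Esym.
have ny1c : y1 != c by apply: (neqE (y := a)); rewrite Esym // Esym.
have Hcy1 : ~~ E c y1.
  apply/negP => Hcy1; case: (boolP (E c y2)) => Hcy2.
    apply: (@bull_contra y1 y2 c a b); sd.
  apply: (@claw_contra y1 a y2 c); sd.
have Hcy2 : ~~ E c y2.
  apply/negP => Hcy2; apply: (@claw_contra y2 y1 b c); sd.
pose A := [set z | [|| z == a, z == y1, z == y2, z == b, E a z, E y1 z, E y2 z | E b z]].
have cA : c \notin A.
  rewrite inE !negb_or eq_sym nac /= eq_sym ny1c /= eq_sym ny2c /= eq_sym nbc /=.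
  by rewrite Hac /= Esym Hcy1 /= Esym Hcy2 /=.
have aA : a \in A by rewrite inE eqxx.
have [u [v [HuA HvA Huv]]] := crossing (Hcon c a) cA aA.
have nua : ~~ E a u by apply: contra HuA => H; rewrite inE H !orbT.
have nu1 : ~~ E y1 u by apply: contra HuA => H; rewrite inE H !orbT.
have nu2 : ~~ E y2 u by apply: contra HuA => H; rewrite inE H !orbT.
have nub : ~~ E b u by apply: contra HuA => H; rewrite inE H !orbT.
have eua : u != a by apply: contraNneq HuA => ->; rewrite inE eqxx.
have eu1 : u != y1 by apply: contraNneq HuA => ->; rewrite inE eqxx orbT.
have eu2 : u != y2 by apply: contraNneq HuA => ->; rewrite inE eqxx !orbT.
have eub : u != b by apply: contraNneq HuA => ->; rewrite inE eqxx !orbT.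
have eva : v != a by apply: contraNneq nua => <-; rewrite Esym.
have ev1 : v != y1 by apply: contraNneq nu1 => <-; rewrite Esym.
have ev2 : v != y2 by apply: contraNneq nu2 => <-; rewrite Esym.
have evb : v != b by apply: contraNneq nub => <-; rewrite Esym.
have Huv' : E v u by rewrite Esym.
case: (boolP (E v a)) => Hva; case: (boolP (E v y1)) => Hv1;
  case: (boolP (E v y2)) => Hv2; case: (boolP (E v b)) => Hvb.
all: try (by exfalso; apply: (@claw_contra v u a y2); sd).
all: try (by exfalso; apply: (@claw_contra v u a b); sd).
all: try (by exfalso; apply: (@claw_contra v u y1 b); sd).
- exfalso; apply: (@bull_contra v y1 a u y2); sd.
- apply: (@p5 u v a y1 y2); sd.
- exfalso; apply: (@bull_contra y1 y2 v a b); sd.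
- exfalso; apply: (@claw_contra y1 a y2 v); sd.
- exfalso; apply: (@bull_contra v y2 b u y1); sd.
- exfalso; apply: (@claw_contra y2 y1 b v); sd.
- apply: (@p5 u v b y2 y1); sd.
- exfalso; move: HvA; rewrite inE (negbTE eva) (negbTE ev1) (negbTE ev2) (negbTE evb).
  by rewrite !(Esym _ v) (negbTE Hva) (negbTE Hv1) (negbTE Hv2) (negbTE Hvb).
Qed.


Lemma structure a b c : (forall x y, connect E x y) ->
  ~~ E a b -> ~~ E b c -> ~~ E a c -> a != b -> b != c -> a != c ->
  path_expansion_ge4 E \/ cycle_expansion_ge6 E.
Proof.
move=> Hcon Hab Hbc Hac nab nbc nac.
have HP : hasP5.
  case: (boolP [exists u, E a u && E b u]) => [/existsP [u /andP [Hau Hbu]] | Hn1];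
  last first.
    apply: (base_case2 Hcon) Hab Hbc Hac nab nbc nac _ => z.
    by apply: contra Hn1 => H; apply/existsP; exists z.
  case: (boolP [exists v, E b v && E c v]) => [/existsP [v /andP [Hbv Hcv]] | Hn2];
  last first.
    apply: (base_case2 (a := b) (b := c) (c := a) Hcon) => //; rewrite 1?Esym 1?eq_sym //.
    by move=> z; apply: contra Hn2 => H; apply/existsP; exists z.
  case: (boolP [exists w, E a w && E c w]) => [/existsP [w /andP [Haw Hcw]] | Hn3];
  last first.
    apply: (base_case2 (a := a) (b := c) (c := b) Hcon) => //; rewrite 1?Esym 1?eq_sym //.
    by move=> z; apply: contra Hn3 => H; apply/existsP; exists z.
  exact: (base_case1 Hab Hbc Hac nab nbc nac Hau Hbu Hbv Hcv Haw Hcw).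
case: HP => S [phi Hs].
have [S' [phi' [m' [Hm' Hs' Hmax]]]] := @maximal #|~: S| S phi 4 (leqnn _) Hs (leqnn 4).
exact: (final Hcon Hm' Hs' Hmax).
Qed.

End Main.

Lemma compl_false (T : finType) (e : rel T) x y : x != y -> compl_graph e x y = false -> e x y.
Proof. by rewrite /compl_graph => -> /= /negbFE. Qed.

Lemma compl_sym (T : finType) (e : rel T) : symmetric e -> symmetric (compl_graph e).
Proof. by move=> es x y; rewrite /compl_graph eq_sym es. Qed.

Lemma compl_irr (T : finType) (e : rel T) : irreflexive (compl_graph e).
Proof. by move=> x; rewrite /compl_graph eqxx. Qed.

Lemma tf_indep (T : finType) (e : rel T) a b c : triangle_free e ->
  a != b -> b != c -> a != c ->
  compl_graph e a b = false -> compl_graph e b c = false -> compl_graph e a c = false -> False.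
Proof.
move=> tf nab nbc nac Hab Hbc Hac; apply: (tf a b c).
by rewrite (compl_false nab Hab) (compl_false nbc Hbc) (compl_false nac Hac).
Qed.

Unset Implicit Arguments.

Theorem corollary1 (T : finType) (e : rel T) :
  simple_graph e -> 0 < #|T| ->
  (triangle_free e <->
   (complete_bipartite e \/
    (let G := compl_graph e in
     [/\ connected_graph G, claw_free G, bull_free G,
         ~ path_expansion_ge4 G & ~ cycle_expansion_ge6 G]))).
Proof.
move=> [es eirr] Tpos; rewrite /=.
have Gsym := compl_sym es; have Girr := @compl_irr T e.
split.
- move=> tf.
  case: (boolP [forall x, [forall y, connect (compl_graph e) x y]]) => Hc; last first.
    left; move: Hc; rewrite negb_forall => /existsP [x]; rewrite negb_forall => /existsP [y Hxy].
    pose A := [set z | connect (compl_graph e) x z].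
    have Hcross : forall z w, z \in A -> w \notin A -> e z w.
      move=> z w Hz Hw; apply: compl_false.
        by apply: contraNneq Hw => <-.
      apply/negbTE/negP => Hzw; move: Hw; rewrite inE => /negP; apply.
      by apply: connect_trans (connect1 Hzw); rewrite inE in Hz.
    have xA : x \in A by rewrite inE connect0.
    have yA : y \notin A by rewrite inE.
    exists A; split.
    + by apply/set0Pn; exists x.
    + by apply/set0Pn; exists y; rewrite in_setC.
    move=> z w.
    case: (boolP (z \in A)) => Hz; case: (boolP (w \in A)) => Hw /=.
    * apply/negP => Hzw; apply: (tf z w y); rewrite Hzw !Hcross //.
    * exact: Hcross.
    * by rewrite es; apply: Hcross.
    * apply/negP => Hzw; apply: (tf x z w); rewrite Hzw !Hcross //.
  right; split.
  + split => // a b; by move: Hc => /forallP /(_ a) /forallP /(_ b).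
  + move=> [g [ginj gE]].
    apply: (@tf_indep _ _ (g (inord 1)) (g (inord 2)) (g (inord 3)) tf);
      by rewrite ?(inj_eq ginj) ?gE /claw_rel -?val_eqE /= ?inordK.
  + move=> [g [ginj gE]].
    apply: (@tf_indep _ _ (g (inord 2)) (g (inord 3)) (g (inord 4)) tf);
      by rewrite ?(inj_eq ginj) ?gE /bull_rel -?val_eqE /= ?inordK.
  + move=> [k [Hk [phi [Hsur Hadj]]]].
    have o : forall i, i <= k -> exists x, val (phi x) = i.
      by move=> i Hi; have [x Hx] := Hsur (inord i); exists x; rewrite Hx /= inordK.
    have [x0 H0] := o 0 isT; have [x2 H2] := o 2 (leq_trans (isT : 2 <= 4) Hk);
      have [x4 H4] := o 4 Hk.
    have n02 : x0 != x2 by apply/eqP => E0; move: H2; rewrite -E0 H0 => /eqP.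
    have n24 : x2 != x4 by apply/eqP => E0; move: H4; rewrite -E0 H2 => /eqP.
    have n04 : x0 != x4 by apply/eqP => E0; move: H4; rewrite -E0 H0 => /eqP.
    apply: (@tf_indep _ _ x0 x2 x4 tf) => //; rewrite Hadj // /path_rel -val_eqE;
      by rewrite ?H0 ?H2 ?H4.
  + move=> [k [Hk [phi [Hsur Hadj]]]].
    have o : forall i (Hi : i < k), exists x, val (phi x) = i.
      by move=> i Hi; have [x Hx] := Hsur (Ordinal Hi); exists x; rewrite Hx.
    have [x0 H0] := o 0 (leq_trans (isT : 1 <= 6) Hk);
    have [x2 H2] := o 2 (leq_trans (isT : 3 <= 6) Hk);
    have [x4 H4] := o 4 (leq_trans (isT : 5 <= 6) Hk).
    have n02 : x0 != x2 by apply/eqP => E0; move: H2; rewrite -E0 H0 => /eqP.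
    have n24 : x2 != x4 by apply/eqP => E0; move: H4; rewrite -E0 H2 => /eqP.
    have n04 : x0 != x4 by apply/eqP => E0; move: H4; rewrite -E0 H0 => /eqP.
    apply: (@tf_indep _ _ x0 x2 x4 tf) => //; rewrite Hadj // /cycle_rel -val_eqE;
      rewrite ?H0 ?H2 ?H4 /= !modn_small //; by apply: leq_trans Hk.
- case.
    move=> [A [_ _ HA]] x y z; rewrite !HA.
    by case: (x \in A); case: (y \in A); case: (z \in A).
  move=> [[_ Hcon] Hclaw Hbull Hnp Hnc] x y z /and3P [Hxy Hyz Hxz].
  have nxy : x != y by apply: contraTneq Hxy => ->; rewrite eirr.
  have nyz : y != z by apply: contraTneq Hyz => ->; rewrite eirr.
  have nxz : x != z by apply: contraTneq Hxz => ->; rewrite eirr.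
  have Ng : forall a b, e a b -> ~~ compl_graph e a b by move=> a b H; rewrite /compl_graph H andbF.
  case: (structure Gsym Girr Hclaw Hbull Hcon (Ng _ _ Hxy) (Ng _ _ Hyz) (Ng _ _ Hxz) nxy nyz nxz).
    exact: Hnp.
  exact: Hnc.
Qed.
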